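(* Let $\mathcal{G}$ be a $k$-uniform hypergraph with $n$ vertices and $m$ edges. Then \[ \sum_{j=1}^n\alpha_j(\mathcal{G})\leq\frac{(k-1)km}{n-1}. \]
   Context: A $k$-uniform hypergraph $\mathcal{G}$ has vertex set $V(\mathcal{G})=[n]$ and edge set $E(\mathcal{G})$ of $k$-element subsets of $V(\mathcal{G})$. For $\mathbf{x}\in\mathbb{R}^n$, $\mathcal{L}_\mathcal{G}\mathbf{x}^k=\sum_{\{i_1,\ldots,i_k\}\in E(\mathcal{G})}\left(x_{i_1}^k+\cdots+x_{i_k}^k-k\,x_{i_1}\cdots x_{i_k}\right)$; the inverse Perron value of vertex $j$ is $\alpha_j(\mathcal{G})=\min\{\mathcal{L}_\mathcal{G}\mathbf{x}^k : \mathbf{x}\in\mathbb{R}^n_+,\ \sum_{i=1}^n x_i^k=1,\ x_j=0\}$. *)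

(* Defs.v *)
From HB Require Import structures.
From mathcomp Require Import all_boot all_order all_algebra.
From mathcomp Require Import classical_sets reals.
Set Implicit Arguments. Unset Strict Implicit. Unset Printing Implicit Defensive.
Import Order.TTheory GRing.Theory Num.Theory.
Local Open Scope ring_scope.
Local Open Scope classical_set_scope.

Definition kuniform (n k : nat) (E : {set {set 'I_n}}) : Prop :=
  forall e, e \in E -> #|e| = k.

Definition laplacian_form {R : realType} (n k : nat) (E : {set {set 'I_n}})
  (x : 'I_n -> R) : R :=
  \sum_(e in E) ((\sum_(i in e) x i ^+ k) - k%:R * \prod_(i in e) x i).

(* inverse Perron value of vertex j:
   min { L_G x^k : x >= 0, sum_i x_i^k = 1, x_j = 0 }
   (the minimum exists by compactness; we take the infimum of the set of values). *)
Definition inv_perron {R : realType} (n k : nat) (E : {set {set 'I_n}})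
  (j : 'I_n) : R :=
  inf [set laplacian_form k E x | x in
        [set x : 'I_n -> R | (forall i, 0 <= x i) /\
                             \sum_(i < n) x i ^+ k = 1 /\ x j = 0]].

(* Main.v *)
Require Import Defs.
From HB Require Import structures.
From mathcomp Require Import all_boot all_order all_algebra.
From mathcomp Require Import classical_sets reals.
From mathcomp Require Import exp.
From mathcomp Require Import ring.
Import Order.TTheory GRing.Theory Num.Theory.
Local Open Scope ring_scope.

Section Helpers.
Variables (R : realType) (n : nat).

Lemma delta_sum (j : 'I_n) (P : pred 'I_n) (c : R) :
  \sum_(i | P i) ((i == j)%:R * c) = (P j)%:R * c.
Proof.
rewrite big_mkcond (bigD1 j) //= eqxx big1 ?addr0.
  by case: (P j); rewrite ?mul1r ?mul0r.
by move=> i /negbTE ->; rewrite mul0r; case: (P i).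
Qed.

End Helpers.

Theorem corollary3p7 (R : realType) (n k : nat) (E : {set {set 'I_n}}) :
  (2 <= k)%N -> (2 <= n)%N -> kuniform k E ->
  \sum_(j < n) inv_perron (R := R) k E j
    <= ((k - 1)%:R * k%:R * (#|E|)%:R) / (n - 1)%:R.
Proof.
move=> hk hn hE.
set c : R := ((n - 1)%:R)^-1.
have c0 : 0 <= c by rewrite invr_ge0 ler0n.
set t : R := c `^ (k%:R^-1).
have t0 : 0 <= t by apply: powR_ge0.
have k0 : (k%:R : R) != 0 by rewrite pnatr_eq0 -lt0n (leq_trans _ hk).
have tk : t ^+ k = c.
  by rewrite -powR_mulrn // -powRrM mulVf // powRr1.
have kn0 : (k != 0)%N by rewrite -lt0n (leq_trans _ hk).
set x := fun (j i : 'I_n) => if i == j then (0 : R) else t.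
have xk : forall j i, x j i ^+ k = c - (i == j)%:R * c.
  move=> j i; rewrite /x; case: eqP => _.
    by rewrite expr0n (negbTE kn0) mul1r subrr.
  by rewrite mul0r subr0.
have Lx : forall j, laplacian_form k E (x j) =
    \sum_(e in E) ((j \in e)%:R * ((k - 1)%:R * c)).
  move=> j; rewrite /laplacian_form; apply: eq_bigr => e eE.
  rewrite (eq_bigr (fun i => c - (i == j)%:R * c)); last by move=> i _; exact: xk.
  rewrite sumrB sumr_const (@delta_sum R n j (fun i => i \in e)) /= hE //.
  case je: (j \in e).
    rewrite (bigD1 j je) /= /x eqxx !mul0r mulr0 subr0 mul1r.
    by rewrite mul1r natrB ?(ltnW hk) // mulrBl mul1r mulr_natl.
  rewrite !mul0r subr0 [\prod_(i in e) _](eq_bigr (fun _ => t)); last first.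
    by move=> i ie; rewrite /x; case: (i =P j) => // ij; move: ie; rewrite ij je.
  by rewrite prodr_const hE // tk mulr_natl subrr.
have key : forall j, inv_perron (R := R) k E j <= laplacian_form k E (x j).
  move=> j; rewrite /inv_perron; apply: ge_inf.
    exists (- (k%:R * #|E|%:R)) => _ [y [y0 [y1 yj]] <-].
    have -> : -(k%:R * #|E|%:R) = \sum_(e in E) (- (k%:R : R)) by rewrite sumr_const mulNrn mulr_natr.
    rewrite /laplacian_form; apply: ler_sum => e eE.
    have hp : \prod_(i in e) y i <= 1.
      apply: prodr_ile1 => i _; rewrite y0 /=.
      rewrite leNgt; apply/negP => y1i.
      have := exprn_egt1 k y1i; rewrite kn0 => h.
      have : y i ^+ k <= 1.
        rewrite -y1 (bigD1 i) //= lerDl sumr_ge0 // => l _.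
        by rewrite exprn_ge0.
      by rewrite leNgt h.
    have hs : 0 <= \sum_(i in e) y i ^+ k by rewrite sumr_ge0 // => i _; rewrite exprn_ge0.
    apply: (le_trans (y := 0 - k%:R * \prod_(i in e) y i)).
      by rewrite add0r lerN2 ler_piMr ?ler0n.
    by rewrite lerD2r.
  exists (x j) => //; split; first by move=> i; rewrite /x; case: (i == j).
  split; last by rewrite /x eqxx.
  rewrite (eq_bigr (fun i => c - (i == j)%:R * c)); last by move=> i _; exact: xk.
  rewrite sumrB sumr_const (@delta_sum R n j xpredT) card_ord /= mul1r.
  rewrite -(mulr_natr c n) -{2}(mulr1 c) -mulrBr -(natrB _ (ltnW hn)).
  by rewrite /c mulVf // pnatr_eq0 subn_eq0 -ltnNge.
apply: le_trans; first by apply: ler_sum => j _; exact: key j.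
rewrite (eq_bigr _ (fun j _ => Lx j)) exchange_big /=.
rewrite (eq_bigr (fun e => k%:R * ((k - 1)%:R * c))); last first.
  move=> e eE; rewrite (eq_bigr (fun j => if j \in e then (k - 1)%:R * c else 0)).
    transitivity (\sum_(j in e) ((k - 1)%:R * c)); first by rewrite [RHS]big_mkcond.
    by rewrite sumr_const (hE e eE) [RHS]mulr_natl.
  by move=> j _; case: (j \in e); rewrite ?mul1r ?mul0r.
rewrite sumr_const -mulr_natr le_eqVlt; apply/orP; left; apply/eqP.
ring.
Qed.
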